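(* Let $k\ge 2$ and consider the Maker–Breaker $k$-in-a-row game on the infinite grid $\mathbb Z^2$: the vertex set is $\mathbb Z^2$ and the edges are all sets of $k$ consecutive points on a horizontal, vertical, or diagonal (slope $1$ or $-1$) line, i.e. all sets $\{p+tv: 0\le t\le k-1\}$ with $p\in\mathbb Z^2$ and $v\in\{(1,0),(0,1),(1,1),(1,-1)\}$. If Breaker has a winning pairing strategy for this game, then $k\ge 9$.
   Context: A winning pairing strategy for Breaker on a hypergraph $(V,E)$ is a family of pairwise disjoint 2-element subsets of $V$ such that every edge of $E$ contains at least one of these pairs. *)

(* Defs.v *)
From Stdlib Require Import ZArith.
Open Scope Z_scope.

Definition point := (Z * Z)%type.

Definition direction (v : point) : Prop :=
  v = (1, 0) \/ v = (0, 1) \/ v = (1, 1) \/ v = (1, -1).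

Definition line_edge (k : nat) (p v : point) (x : point) : Prop :=
  exists t : Z, 0 <= t <= Z.of_nat k - 1 /\
    x = (fst p + t * fst v, snd p + t * snd v).

Definition kinrow_edge (k : nat) (E : point -> Prop) : Prop :=
  exists p v, direction v /\ forall x, E x <-> line_edge k p v x.

Definition two_set (S : point -> Prop) : Prop :=
  exists a b : point, a <> b /\ forall x, S x <-> (x = a \/ x = b).

(* Sets are predicates; "pairwise disjoint" is stated as: two
   members of F that meet are (extensionally) the same set. *)
Definition pairing_strategy (isEdge : (point -> Prop) -> Prop)
    (F : (point -> Prop) -> Prop) : Prop :=
  (forall S, F S -> two_set S) /\
  (forall S T, F S -> F T -> (exists x, S x /\ T x) -> forall x, S x <-> T x) /\
  (forall E, isEdge E -> exists S, F S /\ forall x, S x -> E x).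

Definition breaker_has_pairing_strategy (k : nat) : Prop :=
  exists F, pairing_strategy (kinrow_edge k) F.

(* Main.v *)
Require Import Defs.
From Stdlib Require Import ZArith Lia ClassicalEpsilon.
From HB Require Import structures.
From mathcomp Require all_boot zify.

Module Aux.
Import all_boot zify.
Set Implicit Arguments.
Unset Strict Implicit.
Local Open Scope nat_scope.

HB.instance Definition _ := hasDecEq.Build Z Z.eqb_spec.

Lemma geo0 (a b a' b' t1 t2 s1 s2 v1 v2 w1 w2 : Z) :
  direction (v1, v2) -> direction (w1, w2) ->
  (0 <= t1 <= 7)%Z -> (0 <= t2 <= 7)%Z -> (0 <= s1 <= 7)%Z -> (0 <= s2 <= 7)%Z ->
  t1 <> t2 -> s1 <> s2 -> Z.min t1 t2 = Z.min s1 s2 ->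
  ((a + t1 * v1 = a' + s1 * w1 /\ b + t1 * v2 = b' + s1 * w2 /\
    a + t2 * v1 = a' + s2 * w1 /\ b + t2 * v2 = b' + s2 * w2) \/
   (a + t1 * v1 = a' + s2 * w1 /\ b + t1 * v2 = b' + s2 * w2 /\
    a + t2 * v1 = a' + s1 * w1 /\ b + t2 * v2 = b' + s1 * w2))%Z ->
  a = a' /\ b = b' /\ (v1, v2) = (w1, w2).
Proof.
move=> Hv Hw; rewrite /direction in Hv Hw.
destruct Hv as [Hv|[Hv|[Hv|Hv]]]; destruct Hw as [Hw|[Hw|[Hw|Hw]]];
  case: Hv => -> ->; case: Hw => -> -> => *;
  (split; [lia | split; [lia | first [reflexivity | exfalso; lia]]]).
Qed.

Lemma geo (a b a' b' t1 t2 s1 s2 : Z) (v w : point) :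
  direction v -> direction w ->
  (0 <= t1 <= 7)%Z -> (0 <= t2 <= 7)%Z -> (0 <= s1 <= 7)%Z -> (0 <= s2 <= 7)%Z ->
  t1 <> t2 -> s1 <> s2 -> Z.min t1 t2 = Z.min s1 s2 ->
  ((a + t1 * v.1 = a' + s1 * w.1 /\ b + t1 * v.2 = b' + s1 * w.2 /\
    a + t2 * v.1 = a' + s2 * w.1 /\ b + t2 * v.2 = b' + s2 * w.2) \/
   (a + t1 * v.1 = a' + s2 * w.1 /\ b + t1 * v.2 = b' + s2 * w.2 /\
    a + t2 * v.1 = a' + s1 * w.1 /\ b + t2 * v.2 = b' + s1 * w.2))%Z ->
  a = a' /\ b = b' /\ v = w.
Proof. case: v => v1 v2; case: w => w1 w2; exact: geo0. Qed.

Definition M : nat := 218%nat.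
Definition N : nat := 233%nat.
Definition Eidx := ('I_M * 'I_M * 'I_4)%type.
Definition Xb := ('I_N * 'I_N)%type.
Definition dirv (d : 'I_4) : point :=
  match nat_of_ord d with 0 => (1,0)%Z | 1 => (0,1)%Z | 2 => (1,1)%Z | _ => (1,-1)%Z end.
Definition anchor (e : Eidx) : point := (Z.of_nat e.1.1, Z.of_nat e.1.2 + 7)%Z.
Definition pt (e : Eidx) (t : Z) : point :=
  (fst (anchor e) + t * fst (dirv e.2), snd (anchor e) + t * snd (dirv e.2))%Z.
Definition toZ (x : Xb) : point := (Z.of_nat x.1, Z.of_nat x.2).

Lemma dirv_dir d : direction (dirv d).
Proof.
case: d => [[|[|[|[|n]]]] H]; rewrite /direction /dirv /=; auto.
Qed.

Lemma dirv_inj d d' : dirv d = dirv d' -> d = d'.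
Proof.
case: d => [[|[|[|[|n]]]] H] //; case: d' => [[|[|[|[|n']]]] H'] //;
  rewrite /dirv /= => E; try (apply: val_inj; reflexivity); discriminate.
Qed.


Lemma dirv_cases d : dirv d = (1,0)%Z \/ dirv d = (0,1)%Z \/ dirv d = (1,1)%Z \/ dirv d = (1,-1)%Z.
Proof. exact: dirv_dir. Qed.

Definition inbox (p : point) := (0 <= fst p <= 232 /\ 0 <= snd p <= 232)%Z.

Lemma pt_box e t : (0 <= t <= 7)%Z -> inbox (pt e t).
Proof.
case: e => [[a b] d] Ht; rewrite /inbox /pt /anchor /=.
have ha : (a < 218)%coq_nat by apply/ltP; exact: (ltn_ord a).
have hb : (b < 218)%coq_nat by apply/ltP; exact: (ltn_ord b).
have [-> | [-> | [-> | ->]]] := dirv_cases d; simpl; lia.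
Qed.

Lemma pt_neq e t1 t2 : t1 <> t2 -> pt e t1 <> pt e t2.
Proof.
rewrite /pt => H; have [-> | [-> | [-> | ->]]] := dirv_cases e.2; simpl;
  case => *; lia.
Qed.

Definition toX (p : point) : Xb := (inord (Z.to_nat (fst p)), inord (Z.to_nat (snd p))).

Lemma toZX p : inbox p -> toZ (toX p) = p.
Proof.
case: p => x y [/= h1 h2]; rewrite /toZ /= !inordK; try (rewrite /N; lia).
f_equal; lia.
Qed.

Lemma toZ_inj : injective toZ.
Proof.
case=> [x1 x2] [y1 y2]; rewrite /toZ /= => [[h1 h2]].
by congr pair; apply: val_inj; apply: Nat2Z.inj.
Qed.

Section Main.
Variables (k : nat) (F : (point -> Prop) -> Prop).
Hypothesis hk : (k <= 8)%coq_nat.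
Hypothesis hF : pairing_strategy (kinrow_edge k) F.

Lemma exT e : exists p : Z * Z, exists S, F S /\
  (forall z, S z <-> z = pt e p.1 \/ z = pt e p.2) /\
  (0 <= p.1 <= 7)%Z /\ (0 <= p.2 <= 7)%Z /\ p.1 <> p.2.
Proof.
have hE : kinrow_edge k (line_edge k (anchor e) (dirv e.2)).
  by exists (anchor e), (dirv e.2); split; [apply: dirv_dir | ].
have [S [FS Ssub]] := hF.2.2 _ hE.
have [a [b [ab Sab]]] := hF.1 S FS.
have [t1 [h1 ea]] : line_edge k (anchor e) (dirv e.2) a by apply: Ssub; apply/Sab; left.
have [t2 [h2 eb]] : line_edge k (anchor e) (dirv e.2) b by apply: Ssub; apply/Sab; right.
exists (t1, t2), S; split => //; split.
  by move=> z; rewrite Sab /pt -ea -eb.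
move: hk => hk'; rewrite /=; split; [lia | split; [lia | ]].
by move=> /= ht; apply: ab; rewrite ea eb ht.
Qed.

Definition T e := proj1_sig (constructive_indefinite_description _ (exT e)).
Lemma TP e : exists S, F S /\
  (forall z, S z <-> z = pt e (T e).1 \/ z = pt e (T e).2) /\
  (0 <= (T e).1 <= 7)%Z /\ (0 <= (T e).2 <= 7)%Z /\ (T e).1 <> (T e).2.
Proof. exact: (proj2_sig (constructive_indefinite_description _ (exT e))). Qed.

Definition A e := pt e (T e).1.
Definition B e := pt e (T e).2.
Definition cond e x := (A e == toZ x) || (B e == toZ x).

Lemma lower e : 2 <= \sum_(x : Xb) cond e x.
Proof.
have [S [_ [_ [h1 [h2 h12]]]]] := TP e.
have bA : inbox (A e) by apply: pt_box.
have bB : inbox (B e) by apply: pt_box.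
have nAB : A e <> B e by apply: pt_neq.
have ca : cond e (toX (A e)) by rewrite /cond toZX // eqxx.
have cb : cond e (toX (B e)) by rewrite /cond toZX // eqxx orbT.
have nx : toX (B e) != toX (A e).
  by apply/eqP => E; apply: nAB; rewrite -(toZX bA) -(toZX bB) E.
rewrite (bigD1 (toX (A e))) //= (bigD1 (toX (B e))) //= ca cb.
by rewrite addnA leq_addr.
Qed.

Definition f (e : Eidx) : 'I_7 := inord (Z.to_nat (Z.min (T e).1 (T e).2)).

Lemma pair_eq (p q r s : Z) : (p, q) = (r, s) -> p = r /\ q = s.
Proof. by case=> -> ->. Qed.

Lemma f_inj x : {in [pred e | cond e x] &, injective f}.
Proof.
move=> e e'; rewrite !inE => He He' Hf.
have [S [FS [Sspec [h1 [h2 h12]]]]] := TP e.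
have [S' [FS' [Sspec' [h1' [h2' h12']]]]] := TP e'.
have xS : S (toZ x) by apply/Sspec; case/orP: He => /eqP <-; [by left | by right].
have xS' : S' (toZ x) by apply/Sspec'; case/orP: He' => /eqP <-; [by left | by right].
have SS := hF.2.1 S S' FS FS' (ex_intro _ (toZ x) (conj xS xS')).
have mA : A e = A e' \/ A e = B e' by apply/Sspec'/SS/Sspec; left.
have mB : B e = A e' \/ B e = B e' by apply/Sspec'/SS/Sspec; right.
have mA' : A e' = A e \/ A e' = B e by apply/Sspec/SS/Sspec'; left.
have nAB : A e <> B e by apply: pt_neq.
have cases : (A e = A e' /\ B e = B e') \/ (A e = B e' /\ B e = A e').
  case: mA => hA; case: mB => hB.
  - by exfalso; apply: nAB; rewrite hA hB.
  - by left.
  - by right.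
  - by exfalso; apply: nAB; rewrite hA hB.
have hmin : Z.min (T e).1 (T e).2 = Z.min (T e').1 (T e').2.
  move/(congr1 val): Hf; rewrite /= !inordK; try lia.
have := @geo (fst (anchor e)) (snd (anchor e)) (fst (anchor e')) (snd (anchor e'))
  (T e).1 (T e).2 (T e').1 (T e').2 (dirv e.2) (dirv e'.2) (dirv_dir _) (dirv_dir _)
  h1 h2 h1' h2' h12 h12' hmin.
rewrite /A /B /pt in cases.
case.
  case: cases => [[/pair_eq [c1 c2] /pair_eq [c3 c4]] | [/pair_eq [c1 c2] /pair_eq [c3 c4]]];
   [left | right]; repeat split; assumption.
move: e e' {He He' Hf S FS Sspec h1 h2 h12 S' FS' Sspec' h1' h2' h12' xS xS' SS mA mB mA' nAB cases hmin}
  => [[a b] d] [[a' b'] d']; rewrite /anchor /= => [[ea [eb ed]]].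
have -> : a = a' by apply: val_inj; apply: Nat2Z.inj.
have -> : b = b' by apply: ord_inj; lia.
by rewrite (dirv_inj ed).
Qed.

Lemma upper x : \sum_(e : Eidx) cond e x <= 7.
Proof.
have -> : \sum_(e : Eidx) (cond e x : nat) = #|[pred e | cond e x]|.
  rewrite -sum1_card [RHS]big_mkcond /=; apply: eq_bigr => e _.
  by rewrite inE; case: (cond e x).
rewrite -(card_in_imset (@f_inj x)).
by apply: leq_trans (max_card _) _; rewrite card_ord.
Qed.

Lemma contra : False.
Proof.
have H1 : \sum_(e : Eidx) 2 <= \sum_(e : Eidx) \sum_(x : Xb) cond e x.
  by apply: leq_sum => e _; apply: lower.
rewrite exchange_big /= in H1.
have H2 : \sum_(x : Xb) \sum_(e : Eidx) cond e x <= \sum_(x : Xb) 7.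
  by apply: leq_sum => x _; apply: upper.
have := leq_trans H1 H2.
rewrite !sum_nat_const !card_prod !card_ord /M /N.
move=> /leP; lia.
Qed.

End Main.

End Aux.

Theorem mainTheorem5 (k : nat) (hk : (2 <= k)%nat) :
  breaker_has_pairing_strategy k -> (9 <= k)%nat.
Proof.
  intros [F HF].
  destruct (Nat.le_gt_cases 9 k) as [H|H]; [exact H|].
  exfalso. apply (Aux.contra (k:=k) (F:=F)); [lia | exact HF].
Qed.
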